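(* Let $A,B\in\operatorname{Sym}(n,\mathbb{R})$ be positive semidefinite with $\operatorname{rank}A\ge2$ and $\operatorname{rank}B\ge2$, and let $D:=\{x\in\mathbb{R}^n:{}^txAx<1\}$, $E:=\{x\in\mathbb{R}^n:{}^txBx<1\}$. Suppose the boundaries of $D$ and $E$ do not intersect transversally anywhere, i.e. $Ax$ and $Bx$ are linearly dependent for every $x$ with ${}^txAx={}^txBx=1$. If $E\cap D\ne\emptyset$, then $E\subset D$ or $D\subset E$. *)

(* Defs.v *)
From mathcomp Require Import all_boot all_order all_algebra.
From mathcomp Require Import reals.
Set Implicit Arguments. Unset Strict Implicit. Unset Printing Implicit Defensive.
Import Order.TTheory GRing.Theory Num.Theory.
Local Open Scope ring_scope.

Definition qform (R : realType) (n : nat) (A : 'M[R]_n) (x : 'cV[R]_n) : R :=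
  (x^T *m A *m x) 0 0.

Definition psd (R : realType) (n : nat) (A : 'M[R]_n) : Prop :=
  A^T = A /\ forall x : 'cV[R]_n, 0 <= qform A x.

Definition lin_dep (R : realType) (n : nat) (u v : 'cV[R]_n) : Prop :=
  (\rank (row_mx u v) <= 1)%N.

(* Main.v *)
Require Import Defs.
From mathcomp Require Import all_boot all_order all_algebra.
From mathcomp Require Import reals.
From mathcomp Require Import ring lra.
From Stdlib Require Import Classical.
Import Order.TTheory GRing.Theory Num.Theory.
Local Open Scope ring_scope.

Section Aux.
Set Implicit Arguments. Unset Strict Implicit.
Variables (R : realType) (n : nat).

Definition bil (M : 'M[R]_n) (x y : 'cV[R]_n) : R := (x^T *m M *m y) 0 0.

Lemma bilDr M x y z : bil M x (y + z) = bil M x y + bil M x z.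
Proof. by rewrite /bil mulmxDr mxE. Qed.

Lemma bilZr M x y (t : R) : bil M x (t *: y) = t * bil M x y.
Proof. by rewrite /bil -scalemxAr mxE. Qed.

Lemma bilDl M x y z : bil M (y + z) x = bil M y x + bil M z x.
Proof. by rewrite /bil linearD /= !mulmxDl mxE. Qed.

Lemma bilZl M x y (t : R) : bil M (t *: y) x = t * bil M y x.
Proof. by rewrite /bil linearZ /= -!scalemxAl mxE. Qed.

Lemma bil_sym M x y : M^T = M -> bil M x y = bil M y x.
Proof.
move=> sM; have h : (x^T *m M *m y)^T = y^T *m M *m x.
  by rewrite !trmx_mul trmxK sM mulmxA.
by rewrite /bil -h [RHS]mxE.
Qed.

Lemma bil_exp M y z (t : R) : M^T = M ->
  bil M (y + t *: z) (y + t *: z) =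
  bil M y y + 2 * t * bil M y z + t ^+ 2 * bil M z z.
Proof.
move=> sM; rewrite !bilDl !bilDr !bilZl !bilZr (bil_sym y z sM); ring.
Qed.

Lemma qformE M x : qform M x = bil M x x.
Proof. by []. Qed.

Lemma psd0 M y z : M^T = M -> (forall w, 0 <= bil M w w) ->
  bil M y y = 0 -> bil M z y = 0.
Proof.
move=> sM nn y0.
set b := bil M z y; set g := bil M z z.
have g0 : 0 <= g by apply: nn.
have w0 : 0 < (g + 1)^-1 by rewrite invr_gt0; lra.
set w := (g + 1)^-1 in w0 *.
have wg : w * g = 1 - w.
  have h1 : w * (g + 1) = 1 by rewrite /w mulVf //; apply/eqP; lra.
  nra.
have := nn (y + (- b * w) *: z).
rewrite bil_exp // y0 (bil_sym y z sM) -/b -/g => H.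
have H2 : 0 <= - (b ^+ 2 * w * (1 + w)).
  have -> : - (b ^+ 2 * w * (1 + w)) = 0 + 2 * (- b * w) * b + (- b * w) ^+ 2 * g.
    have -> : (- b * w) ^+ 2 * g = b ^+ 2 * w * (w * g) by ring.
    rewrite wg; ring.
  exact: H.
have H3 : 0 < w * (1 + w) by nra.
have : b ^+ 2 <= 0 by nra.
have : 0 <= b ^+ 2 by rewrite sqr_ge0.
move=> h1 h2; have : b ^+ 2 = 0 by lra.
by move/eqP; rewrite sqrf_eq0 => /eqP.
Qed.

Lemma dep_lemma (u v : 'cV[R]_n) : u != 0 ->
  (\rank (row_mx u v) <= 1)%N -> exists k, v = k *: u.
Proof.
move=> u0 rk.
have e : \rank (row_mx u v) = \rank (u^T + v^T)%MS.
  by rewrite -mxrank_tr tr_row_mx addsmxE.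
case: (boolP (v^T <= u^T)%MS) => [/sub_rVP [k hk]|nsub].
  by exists k; rewrite -[v]trmxK hk linearZ /= trmxK.
have lt : (u^T < u^T + v^T)%MS by rewrite ltmxE addsmxSl addsmx_sub negb_and nsub orbT.
have := rank_ltmx lt; rewrite -e rank_rV.
have -> : (u^T != 0) by apply: contra u0 => /eqP h; rewrite -[u]trmxK h linear0.
by move=> h; move: (leq_trans h rk).
Qed.

End Aux.

Theorem proposition2p5 (R : realType) (n : nat) (A B : 'M[R]_n) :
  psd A -> psd B ->
  (2 <= \rank A)%N -> (2 <= \rank B)%N ->
  (forall x : 'cV[R]_n, qform A x = 1 -> qform B x = 1 ->
     lin_dep (A *m x) (B *m x)) ->
  (exists x : 'cV[R]_n, qform B x < 1 /\ qform A x < 1) ->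
  (forall x : 'cV[R]_n, qform B x < 1 -> qform A x < 1) \/
  (forall x : 'cV[R]_n, qform A x < 1 -> qform B x < 1).
Proof.
move=> [sA nA] [sB nB] _ _ Hdep _.
have nA' : forall w, 0 <= bil A w w by move=> w; exact: nA.
have nB' : forall w, 0 <= bil B w w by move=> w; exact: nB.
have key : forall y z, bil A y y = bil B y y -> bil A z y = bil B z y.
  move=> y z e.
  have [s0|s0] : bil A y y = 0 \/ 0 < bil A y y.
    by have := nA' y; rewrite le_eqVlt => /orP[/eqP ->|->]; [left|right].
    rewrite (psd0 z sA nA' s0) (psd0 z sB nB') //; by rewrite -e.
  set s := bil A y y in s0 e.
  have sq : Num.sqrt s ^+ 2 = s by rewrite sqr_sqrtr // ltW.
  have sp : 0 < Num.sqrt s by rewrite sqrtr_gt0.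
  set r := (Num.sqrt s)^-1.
  have rr : r * (r * s) = 1.
    have : r * (r * Num.sqrt s ^+ 2) = 1 by rewrite /r; field; apply/eqP; lra.
    by rewrite sq.
  have r0 : r != 0 by rewrite invr_eq0; apply/eqP; lra.
  set x := r *: y.
  have hA1 : qform A x = 1 by rewrite qformE /x bilZl bilZr.
  have hB1 : qform B x = 1 by rewrite qformE /x bilZl bilZr -e.
  have hd := Hdep x hA1 hB1.
  have Ax0 : A *m x != 0.
    apply/eqP => h; move: hA1; rewrite /qform -mulmxA h mulmx0 mxE => h'.
    by have : (0 : R) = 1 by []; lra.
  have [k hk] := dep_lemma Ax0 hd.
  have k1 : k = 1.
    move: hB1; rewrite /qform -mulmxA hk -scalemxAr mxE mulmxA.
    by rewrite -/(qform A x) hA1 mulr1.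
  have hx : bil A z x = bil B z x by rewrite /bil -!mulmxA hk k1 scale1r.
  by move: hx; rewrite /x !bilZr => /(mulfI r0).
case: (Classical_Prop.classic (forall x, qform B x < 1 -> qform A x < 1)) => [h|nh]; first by left.
right.
have [p hp] := not_all_ex_not _ _ nh.
have [pB pA] := imply_to_and _ _ hp.
move: pA => /negP; rewrite -leNgt => pA.
move=> q qA; rewrite ltNge; apply/negP => qB.
rewrite !qformE in pB pA qA qB.
set a := bil A p p - bil B p p.
set b := bil A p q - bil B p q.
set c := bil A q q - bil B q q.
have a0 : 0 < a by rewrite /a; lra.
have c0 : c < 0 by rewrite /c; lra.
have D0 : 0 <= b ^+ 2 - a * c by nra.
set s := Num.sqrt (b ^+ 2 - a * c).
have sq : s ^+ 2 = b ^+ 2 - a * c by rewrite sqr_sqrtr.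
have cn0 : c != 0 by apply/eqP; lra.
set t := (- b - s) / c.
have ct : c * t = - b - s by rewrite /t mulrC divfK.
have hr : a + 2 * t * b + t ^+ 2 * c = 0.
  have : c * (a + 2 * t * b + t ^+ 2 * c) = 0.
    have -> : c * (a + 2 * t * b + t ^+ 2 * c) = a * c + 2 * b * (c * t) + (c * t) ^+ 2 by ring.
    rewrite ct; nra.
  by move/eqP; rewrite mulf_eq0 (negbTE cn0) => /eqP.
set y := p + t *: q.
have hy : bil A y y = bil B y y.
  rewrite /y !bil_exp //; apply/eqP; rewrite -subr_eq0; apply/eqP.
  rewrite -hr /a /b /c; ring.
have e1 := key y p hy.
have e2 := key y q hy.
move: e1 e2; rewrite /y !bilDr !bilZr (bil_sym q p sA) (bil_sym q p sB) => e1 e2.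
have h1 : a + t * b = 0 by rewrite /a /b; lra.
have h2 : b + t * c = 0 by rewrite /b /c; lra.
have : a = t ^+ 2 * c by nra.
have : 0 <= t ^+ 2 by rewrite sqr_ge0.
move=> h3 h4; have : (0:R) < 0 by nra.
by rewrite ltxx.
Qed.
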